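(* For every real $p>1$, the $p$-geometric rule satisfies $\kappa$-group representation for $\kappa(\alpha,\lambda)=\lceil\frac{p^{\lambda+1}}{\alpha(p-1)}\rceil$. That is, for every rational $\alpha\in(0,1]$, every $\lambda\in\mathbb N$, every profile $P$, every ranking $r$ that the $p$-geometric rule may output on $P$ (under any tie-breaking), and every group $N'$ that is $(\alpha,\lambda)$-significant in $P$, we have $\mathrm{avg}(N',r_{\le k})\ge\lambda$ where $k=\lceil\frac{p^{\lambda+1}}{\alpha(p-1)}\rceil$.
   Context: Let $N=[n]$ be a finite set of voters and $A$ a finite set of $m$ alternatives; a profile $P=(A_1,\dots,A_n)$ gives each voter $i$ a non-empty approval set $A_i\subseteq A$. A ranking $r=(r_1,\dots,r_m)$ is a linear order of $A$, $r_{\le k}=\{r_1,\dots,r_k\}$, with $r_{\le k}=A$ for $k\ge m$. For nonempty $N'\subseteq N$ and $S\subseteq A$, $\mathrm{avg}(N',S)=\frac1{|N'|}\sum_{i\in N'}|A_i\cap S|$. The cohesiveness of $N'$ is $\lambda(N')=|\bigcap_{i\in N'}A_i|$; $N'$ is $(\alpha,\lambda)$-significant in $P$ if $|N'|=\lceil\alpha n\rceil$ and $\lambda(N')\ge\lambda$. For a weight vector $\mathbf w=(w_1,w_2,\dots)$ of nonnegative reals and $S\subseteq A$, let $w(S)=\sum_{i\in N}\sum_{j=1}^{|A_i\cap S|}w_j$. The rule $\mathbf w$-RAV builds $r$ iteratively from the empty ranking: at step $k\in[m]$ it appends an unranked alternative $a$ maximizing $w(r_{\le k-1}\cup\{a\})-w(r_{\le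 k-1})$ (ties broken arbitrarily). The $p$-geometric rule is $\mathbf w$-RAV with $\mathbf w=(\frac1p,\frac1{p^2},\frac1{p^3},\dots)$. *)

(* Defs.v *)
From HB Require Import structures.
From mathcomp Require Import all_boot all_order all_algebra.
Set Implicit Arguments. Unset Strict Implicit. Unset Printing Implicit Defensive.
Import Order.TTheory GRing.Theory Num.Theory.
Local Open Scope ring_scope.

(* Voters are 'I_n, alternatives form a finType A, a profile gives each voter
   an approval set. *)
Definition profile (n : nat) (A : finType) := 'I_n -> {set A}.

Definition valid_profile n (A : finType) (P : profile n A) : Prop :=
  forall i : 'I_n, P i != set0.

(* A ranking is a linear order of A: a duplicate-free sequence listing all of A. *)
Definition is_ranking (A : finType) (r : seq A) : Prop :=
  uniq r /\ size r = #|A|.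

(* r_{<= k}; equals A when k >= m for a ranking *)
Definition prefix_set (A : finType) (r : seq A) (k : nat) : {set A} :=
  [set x in take k r].

Definition avg (R : numFieldType) n (A : finType) (P : profile n A)
  (N' : {set 'I_n}) (S : {set A}) : R :=
  (\sum_(i in N') #|P i :&: S|)%:R / #|N'|%:R.

Definition cohesiveness n (A : finType) (P : profile n A) (N' : {set 'I_n}) : nat :=
  #|\bigcap_(i in N') P i|.

Definition significant n (A : finType) (P : profile n A) (alpha : rat) (lambda : nat)
  (N' : {set 'I_n}) : Prop :=
  (#|N'| : int) = Num.ceil (alpha * n%:R) /\ (lambda <= cohesiveness P N')%N.

(* w(S) = sum_i sum_{j=1}^{|A_i cap S|} w_j ; the weight vector is w : nat -> R,
   with w j = w_j for j >= 1 (w 0 is unused). *)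
Definition wscore (R : numDomainType) n (A : finType) (w : nat -> R) (P : profile n A)
  (S : {set A}) : R :=
  \sum_(i < n) \sum_(1 <= j < #|P i :&: S|.+1) w j.

(* r is a possible output of w-RAV on P (under some tie-breaking): at each step
   k in [m] (here 0-indexed: step k.+1 appends nth k), the appended alternative
   maximizes the marginal gain among the unranked alternatives. *)
Definition wRAV_output (R : numDomainType) n (A : finType) (w : nat -> R)
  (P : profile n A) (r : seq A) : Prop :=
  is_ranking r /\
  forall (k : nat) (Hk : (k < size r)%N) (x0 : A) (a : A),
    a \notin take k r ->
    wscore w P (prefix_set r k :|: [set a]) - wscore w P (prefix_set r k)
    <= wscore w P (prefix_set r k :|: [set nth x0 r k]) - wscore w P (prefix_set r k).

Definition geom_weights (R : numFieldType) (p : R) : nat -> R := fun j => (p ^+ j)^-1.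

(* Main.v *)
Require Import Defs.
From HB Require Import structures.
From mathcomp Require Import all_boot all_order all_algebra.
From mathcomp Require Import ring lra.
Import Order.TTheory GRing.Theory Num.Theory.
Local Open Scope ring_scope.

Section Arith.
Variable R : realFieldType.

Lemma bernoulli (h : R) (m : nat) : -1 <= h -> 1 + m%:R * h <= (1 + h) ^+ m.
Proof.
move=> hh; elim: m => [|m IH]; first by rewrite mul0r addr0 expr0.
rewrite exprSr -natr1.
have h0 : 0 <= 1 + h by lra.
have := ler_wpM2r h0 IH.
have : 0 <= m%:R * h * h by rewrite -mulrA mulr_ge0 // ?ler0n // -expr2 sqr_ge0.
nra.
Qed.

Lemma term_lb (p : R) (x l : nat) : 1 < p ->
  p^-1 ^+ l.+1 * (1 + (p - 1) * (l%:R - x%:R)) <= p^-1 ^+ x.+1.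
Proof.
move=> hp.
have p0 : 0 < p by lra.
have q0 : 0 < p^-1 by rewrite invr_gt0.
have pq : p * p^-1 = 1 by rewrite mulfV // gt_eqF.
case: (leqP x l) => hxl.
- have -> : l = (x + (l - x))%N by rewrite subnKC.
  set m := (l - x)%N.
  rewrite natrD addrAC subrr add0r -addSn exprD.
  rewrite -mulrA -[X in _ <= X]mulr1 ler_pM2l ?exprn_gt0 //.
  rewrite exprVn mulrC ler_pdivrMr ?exprn_gt0 // mul1r.
  have hb := bernoulli (p - 1) m.
  rewrite (_ : 1 + (p - 1) = p) in hb; last by ring.
  rewrite mulrC; apply: hb; lra.
- have -> : x = (l + (x - l))%N by rewrite subnKC // ltnW.
  set m := (x - l)%N.
  rewrite natrD opprD addrA subrr add0r -addSn exprD.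
  rewrite ler_pM2l ?exprn_gt0 //.
  have hb := bernoulli (p^-1 - 1) m.
  rewrite (_ : 1 + (p^-1 - 1) = p^-1) in hb; last by ring.
  have hq : -1 <= p^-1 - 1 by lra.
  have := hb hq.
  have : 1 - p <= p^-1 - 1.
    have : 0 <= (p - 1) ^+ 2 * p^-1 by rewrite mulr_ge0 ?sqr_ge0 // ltW.
    rewrite expr2; nra.
  have : 0 <= m%:R :> R by rewrite ler0n.
  nra.
Qed.

Lemma geom_sum (p : R) (x : nat) : 1 < p ->
  (p - 1) * \sum_(1 <= j < x.+1) p^-1 ^+ j = 1 - p^-1 ^+ x.
Proof.
move=> hp; have pq : p * p^-1 = 1 by rewrite mulfV // gt_eqF //; lra.
elim: x => [|x IH]; first by rewrite big_geq // mulr0 expr0 subrr.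
rewrite big_nat_recr //= mulrDr IH exprSr.
set y := p^-1 ^+ x.
have pn0 : p != 0 by rewrite gt_eqF //; lra.
by field.
Qed.

End Arith.

Lemma card_add (A : finType) (B S : {set A}) a : a \notin S ->
  #|B :&: (S :|: [set a])| = ((a \in B) + #|B :&: S|)%N.
Proof.
move=> haS; case: (boolP (a \in B)) => ha.
- have -> : B :&: (S :|: [set a]) = a |: (B :&: S).
    by apply/setP=> y; rewrite !inE; case: eqP => [->|]; rewrite ?ha ?orbT ?orbF.
  by rewrite cardsU1 inE (negbTE haS) andbF.
- have -> : B :&: (S :|: [set a]) = B :&: S.
    by apply/setP=> y; rewrite !inE; case: eqP => [->|]; rewrite ?(negbTE ha) ?orbF.
  by rewrite add0n.
Qed.

Lemma wscore_add (R : numDomainType) n (A : finType) (w : nat -> R) (P : profile n A)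
  (S : {set A}) a : a \notin S ->
  wscore w P (S :|: [set a]) - wscore w P S =
  \sum_(i < n) (if a \in P i then w (#|P i :&: S|).+1 else 0).
Proof.
move=> haS; rewrite /wscore -sumrB; apply: eq_bigr => i _.
rewrite card_add //; case: (a \in P i) => /=.
- by rewrite add1n big_nat_recr //= addrAC subrr add0r.
- by rewrite add0n subrr.
Qed.

Lemma gain_lb (R : realFieldType) (p : R) (hp : 1 < p) n (A : finType) (P : profile n A)
  (S : {set A}) a (N' : {set 'I_n}) (l : nat) : a \notin S ->
  (forall i, i \in N' -> a \in P i) ->
  (\sum_(i in N') #|P i :&: S| <= l * #|N'|)%N ->
  #|N'|%:R * p^-1 ^+ l.+1 <=
  wscore (geom_weights p) P (S :|: [set a]) - wscore (geom_weights p) P S.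
Proof.
move=> haS haN hsum; rewrite wscore_add //.
have p0 : 0 < p by lra.
have q0 : 0 < p^-1 by rewrite invr_gt0.
rewrite (bigID (fun i => i \in N')) /=.
rewrite -[X in X <= _]addr0; apply: lerD; last first.
  by apply: sumr_ge0 => i _; case: ifP => // _; rewrite /geom_weights invr_ge0 exprn_ge0 // ltW.
rewrite (eq_bigr (fun i => p^-1 ^+ (#|P i :&: S|).+1)); last first.
  by move=> i hi; rewrite haN // /geom_weights exprVn.
apply: (@le_trans _ _ (\sum_(i in N') p^-1 ^+ l.+1 * (1 + (p-1) * (l%:R - (#|P i :&: S|)%:R)))); last first.
  by apply: ler_sum => i _; exact: term_lb.
set d := fun i : 'I_n => (l%:R - (#|P i :&: S|)%:R : R).
have hd : 0 <= \sum_(i in N') d i.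
  by rewrite /d sumrB sumr_const -natr_sum subr_ge0 (_ : l%:R *+ #|N'| = (l * #|N'|)%:R) ?ler_nat // natrM mulr_natr.
rewrite (eq_bigr (fun i => p^-1 ^+ l.+1 + p^-1 ^+ l.+1 * (p - 1) * d i)); last first.
  by move=> i _; rewrite /d; ring.
rewrite big_split /= sumr_const -mulr_sumr mulr_natl lerDl.
apply: mulr_ge0 => //; apply: mulr_ge0; [by rewrite exprn_ge0 // ltW | lra].
Qed.

Lemma inner_lt (R : realFieldType) (p : R) (hp : 1 < p) (x : nat) :
  \sum_(1 <= j < x.+1) geom_weights p j < (p - 1)^-1.
Proof.
have p1 : 0 < p - 1 by lra.
have q0 : 0 < p^-1 by rewrite invr_gt0; lra.
rewrite (eq_bigr (fun j => p^-1 ^+ j)); last by move=> j _; rewrite /geom_weights exprVn.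
rewrite -[(p - 1)^-1]div1r ltr_pdivlMr // mulrC geom_sum //.
by rewrite ltrBlDr ltrDl exprn_gt0.
Qed.

Lemma wscore_lt (R : realFieldType) (p : R) (hp : 1 < p) n (hn : (0 < n)%N)
  (A : finType) (P : profile n A) (S : {set A}) :
  wscore (geom_weights p) P S < n%:R / (p - 1).
Proof.
rewrite /wscore; case: n hn P => // n _ P.
rewrite big_ord_recl.
rewrite (_ : n.+1%:R / (p - 1) = (p - 1)^-1 + \sum_(i < n) (p - 1)^-1); last first.
  by rewrite sumr_const card_ord -mulrS mulrC mulr_natr.
apply: ltr_leD; first exact: inner_lt.
by apply: ler_sum => i _; apply: ltW; apply: inner_lt.
Qed.

Lemma prefix_setS (A : finType) (r : seq A) x0 t : (t < size r)%N ->
  prefix_set r t.+1 = prefix_set r t :|: [set nth x0 r t].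
Proof.
move=> ht; rewrite /prefix_set (take_nth x0 ht).
by apply/setP => y; rewrite !inE mem_rcons in_cons orbC.
Qed.

Lemma wscore_telescope (R : numDomainType) n (A : finType) (w : nat -> R)
  (P : profile n A) (r : seq A) x0 k : (k <= size r)%N ->
  wscore w P (prefix_set r k) =
  \sum_(0 <= t < k) (wscore w P (prefix_set r t :|: [set nth x0 r t])
                     - wscore w P (prefix_set r t)).
Proof.
move=> hk.
rewrite (eq_big_nat _ _ (F2 := fun t => wscore w P (prefix_set r t.+1) - wscore w P (prefix_set r t))); last first.
  by move=> t /andP [_ ht]; rewrite (prefix_setS _ _ x0) //; apply: leq_trans hk.
rewrite telescope_sumr // [X in _ = _ - X](_ : _ = 0) ?subr0 //.
rewrite /wscore big1 // => i _.
rewrite /prefix_set take0 (_ : [set x in [::]] = set0) ?setI0 ?cards0 ?big_geq //.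
Qed.

Theorem theorem5 (R : archiRealFieldType) (p : R) (hp : 1 < p)
  (alpha : rat) (halpha0 : 0 < alpha) (halpha1 : alpha <= 1) (lambda : nat)
  (n : nat) (hn : (0 < n)%N) (A : finType) (P : profile n A) (hP : valid_profile P)
  (r : seq A) (hr : wRAV_output (geom_weights p) P r)
  (N' : {set 'I_n}) (hN' : significant P alpha lambda N') :
  lambda%:R <=
    @avg R n A P N'
      (prefix_set r `|Num.ceil (p ^+ lambda.+1 / (ratr alpha * (p - 1)))|%N).
Proof.
set x := p ^+ lambda.+1 / (ratr alpha * (p - 1)).
set k := `|Num.ceil x|%N.
have p0 : 0 < p by lra.
have p1 : 0 < p - 1 by lra.
have a0 : 0 < ratr alpha :> R by rewrite ltr0q.
have xpos : 0 < x by rewrite /x divr_gt0 ?exprn_gt0 // mulr_gt0.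
have hk : x <= k%:R.
  rewrite /k natr_absz ger0_norm ?ceil_ge //.
  by rewrite ceil_ge0; lra.
have hN : ratr alpha * n%:R <= #|N'|%:R :> R.
  have h1 := ceil_ge (alpha * n%:R).
  rewrite -hN'.1 in h1.
  rewrite -ratr_nat -rmorphM /=.
  have -> : (#|N'|%:R : R) = ratr ((#|N'|%:Z)%:~R) by rewrite ratr_int.
  by rewrite ler_rat.
have Npos : (0 < #|N'|)%N.
  rewrite -(ltr0n R); apply: lt_le_trans hN.
  by rewrite mulr_gt0 // ltr0n.
rewrite /avg ler_pdivlMr ?ltr0n // -natrM ler_nat.
set Sk := prefix_set r k.
set C := \bigcap_(i in N') P i.
case: (boolP (C \subset Sk)) => hC.
  rewrite mulnC -sum_nat_const; apply: leq_sum => i hi.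
  apply: leq_trans hN'.2 _; apply: subset_leq_card.
  by rewrite subsetI hC (bigcap_inf _ hi).
case/subsetPn: hC => c hcC hcS.
rewrite leqNgt; apply/negP => hlt.
have hcP : forall i, i \in N' -> c \in P i.
  by move=> i hi; apply: (subsetP (bigcap_inf _ hi)).
have hcr : c \in r.
  apply/negPn/negP => hcr.
  have : (size r <= size (enum (predC1 c)))%N.
    apply: uniq_leq_size; first exact: hr.1.1.
    by move=> y hy; rewrite mem_enum inE; apply/eqP => hyc; move: hy; rewrite hyc (negbTE hcr).
  rewrite -cardE cardC1 hr.1.2.
  have : (0 < #|A|)%N by apply/card_gt0P; exists c.
  by case: #|A| => // m _; rewrite ltnn.
have hkr : (k < size r)%N.
  rewrite ltnNge; apply/negP => h; move: hcS; rewrite /Sk /prefix_set inE take_oversize //.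
  by rewrite hcr.
have hsub : forall t, (t <= k)%N -> prefix_set r t \subset Sk.
  move=> t ht; apply/subsetP => y; rewrite /Sk /prefix_set !inE.
  by rewrite -(take_takel _ ht) => /mem_take.
have hstep : forall t, (t < k)%N ->
  #|N'|%:R * p^-1 ^+ lambda.+1 <=
  wscore (geom_weights p) P (prefix_set r t :|: [set nth c r t]) -
  wscore (geom_weights p) P (prefix_set r t).
  move=> t ht.
  have hct : c \notin prefix_set r t.
    by apply: contra hcS; apply: (subsetP (hsub _ (ltnW ht))).
  apply: le_trans (hr.2 t (ltn_trans ht hkr) c c _).
    apply: gain_lb => //.
    apply: leq_trans (ltnW hlt); apply: leq_sum => i _.
    by apply: subset_leq_card; apply: setIS; apply: hsub; apply: ltnW.
  by move: hct; rewrite /prefix_set inE.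
have hsum : k%:R * (#|N'|%:R * p^-1 ^+ lambda.+1) <= wscore (geom_weights p) P Sk.
  rewrite /Sk (@wscore_telescope _ _ _ _ _ _ c k (ltnW hkr)).
  apply: (@le_trans _ _ (\sum_(0 <= t < k) (#|N'|%:R * p^-1 ^+ lambda.+1))).
    by rewrite sumr_const_nat subn0 mulr_natl.
  by apply: ler_sum_nat => t /andP [_ ht]; exact: hstep.
have hup := @wscore_lt _ p hp n hn A P Sk.
have : n%:R / (p - 1) <= k%:R * (#|N'|%:R * p^-1 ^+ lambda.+1).
  apply: le_trans (_ : x * (ratr alpha * n%:R * p^-1 ^+ lambda.+1) <= _).
    have -> : x * (ratr alpha * n%:R * p^-1 ^+ lambda.+1) = n%:R / (p - 1).
      have h1 : p ^+ lambda.+1 != 0 by rewrite expf_neq0 // gt_eqF.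
      have h2 : ratr alpha != 0 :> R by rewrite gt_eqF.
      have h3 : p - 1 != 0 by rewrite gt_eqF.
      rewrite /x exprVn; field.
      by rewrite h2 h3 h1.
    by [].
  apply: ler_pM => //; first exact: ltW.
    apply: mulr_ge0; [apply: mulr_ge0; [exact: ltW | exact: ler0n] | apply: exprn_ge0; rewrite invr_ge0; exact: ltW].
  by apply: ler_wpM2r => //; rewrite exprn_ge0 // invr_ge0 ltW.
lra.
Qed.
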